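(* For any $\beta_0\in(0,\pi)$ there exists a finite point set $P$ in the plane such that $\max_{\beta\in(0,\pi)}\operatorname{area}(\mathcal{O}_\beta\mathcal{H}(P))\neq\operatorname{area}(\mathcal{O}_{\beta_0}\mathcal{H}(P))$.
   Context: For $\beta\in(0,\pi)$, $\mathcal{O}_\beta$ is the pair of lines through the origin with slopes $0$ and $\tan\beta$. Given an apex $a$, every point is uniquely $a+s(1,0)+t(\cos\beta,\sin\beta)$; an $\mathcal{O}_\beta$-quadrant with apex $a$ is one of the four open sets of such points with $s>0,t>0$; $s<0,t>0$; $s>0,t<0$; or $s<0,t<0$. A quadrant is $P$-free if it contains no point of $P$, and the $\mathcal{O}_\beta$-hull $\mathcal{O}_\beta\mathcal{H}(P)$ is the plane minus the union of all $P$-free $\mathcal{O}_\beta$-quadrants. $\operatorname{area}$ denotes Lebesgue measure. *)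

(* Defs.v *)
From HB Require Import structures.
From mathcomp Require Import all_boot all_order all_algebra.
From mathcomp Require Import all_classical all_reals all_analysis.
Set Implicit Arguments. Unset Strict Implicit. Unset Printing Implicit Defensive.
Import Order.TTheory GRing.Theory Num.Theory.
Local Open Scope classical_set_scope.
Local Open Scope ring_scope.

(* Oblique coordinates (s, t) of p relative to apex a:
   p = a + s (1,0) + t (cos b, sin b), valid since sin b <> 0 for b in (0,pi). *)
Definition obl_t (R : realType) (b : R) (a p : R * R) : R :=
  (p.2 - a.2) / sin b.
Definition obl_s (R : realType) (b : R) (a p : R * R) : R :=
  (p.1 - a.1) - obl_t b a p * cos b.

Definition Oquadrant (R : realType) (b : R) (a : R * R) (e1 e2 : bool)
  : set (R * R) :=
  [set p | (if e1 then 0 < obl_s b a p else obl_s b a p < 0) /\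
           (if e2 then 0 < obl_t b a p else obl_t b a p < 0)].

Definition Pfree (R : realType) (P : seq (R * R)) (Q : set (R * R)) : Prop :=
  forall x, x \in P -> ~ Q x.

Definition Ohull (R : realType) (b : R) (P : seq (R * R)) : set (R * R) :=
  [set p | ~ exists a e1 e2,
      Pfree P (Oquadrant b a e1 e2) /\ Oquadrant b a e1 e2 p].

Definition area (R : realType) (A : set (R * R)) : \bar R :=
  ((@lebesgue_measure R) \x (@lebesgue_measure R))%E A.

(* Main.v *)
Require Import Defs.
From HB Require Import structures.
From mathcomp Require Import all_boot all_order all_algebra.
From mathcomp Require Import all_classical all_reals all_analysis.
From mathcomp Require Import ring lra.
Import Order.TTheory GRing.Theory Num.Theory.
Local Open Scope classical_set_scope.
Local Open Scope ring_scope.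
Set Implicit Arguments. Unset Strict Implicit.

Section G.
Variable R : realType.

Definition Tc (b : R) (p : R * R) := p.2 / sin b.
Definition Sc (b : R) (p : R * R) := p.1 - Tc b p * cos b.
Definition pt (b s t : R) : R * R := (s + t * cos b, t * sin b).
Definition quad (e1 e2 : bool) (u v : R) :=
  (if e1 then 0 < u else u < 0) /\ (if e2 then 0 < v else v < 0).

Lemma obl_tE b a p : obl_t b a p = Tc b p - Tc b a.
Proof. by rewrite /obl_t /Tc mulrBl. Qed.
Lemma obl_sE b a p : obl_s b a p = Sc b p - Sc b a.
Proof. rewrite /obl_s /Sc obl_tE; ring. Qed.

Lemma OquadE b a e1 e2 p :
  Oquadrant b a e1 e2 p <-> quad e1 e2 (Sc b p - Sc b a) (Tc b p - Tc b a).
Proof. by rewrite /Oquadrant /quad /= obl_sE obl_tE. Qed.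

Lemma Tc_pt b s t : sin b != 0 -> Tc b (pt b s t) = t.
Proof. move=> h; rewrite /Tc /pt /=; field; exact h. Qed.
Lemma Sc_pt b s t : sin b != 0 -> Sc b (pt b s t) = s.
Proof. move=> h; rewrite /Sc Tc_pt // /pt /=; ring. Qed.

Lemma chain4 (x y s1 s2 s3 s4 t1 t2 t3 t4 : R) :
  s1 < s2 -> s2 < s3 -> s3 < s4 -> t1 < t2 -> t2 < t3 -> t3 < t4 ->
  y != t1 -> y != t2 -> y != t3 -> y != t4 ->
  exists sa ta e1 e2, quad e1 e2 (x - sa) (y - ta) /\
    ~ quad e1 e2 (s1 - sa) (t1 - ta) /\ ~ quad e1 e2 (s2 - sa) (t2 - ta) /\
    ~ quad e1 e2 (s3 - sa) (t3 - ta) /\ ~ quad e1 e2 (s4 - sa) (t4 - ta).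
Proof.
move=> h12 h23 h34 g12 g23 g34 n1 n2 n3 n4.
rewrite /quad.
have [yl|yg] := ltP y t1.
  exists (x - 1), ((y + t1)/2), true, false; rewrite /=; lra.
have {}yg : t1 < y by rewrite lt_neqAle eq_sym n1 yg.
have [yl2|yg2] := ltP y t2.
  have [xl|xg] := ltP x s2.
    exists ((x + s2)/2), ((y + t1)/2), false, true; rewrite /=; lra.
  exists ((x + s1)/2), ((y + t2)/2), true, false; rewrite /=; lra.
have {}yg2 : t2 < y by rewrite lt_neqAle eq_sym n2 yg2.
have [yl3|yg3] := ltP y t3.
  have [xl|xg] := ltP x s3.
    exists ((x + s3)/2), ((y + t2)/2), false, true; rewrite /=; lra.
  exists ((x + s2)/2), ((y + t3)/2), true, false; rewrite /=; lra.
have {}yg3 : t3 < y by rewrite lt_neqAle eq_sym n3 yg3.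
have [yl4|yg4] := ltP y t4.
  have [xl|xg] := ltP x s4.
    exists ((x + s4)/2), ((y + t3)/2), false, true; rewrite /=; lra.
  exists ((x + s3)/2), ((y + t4)/2), true, false; rewrite /=; lra.
have {}yg4 : t4 < y by rewrite lt_neqAle eq_sym n4 yg4.
exists (x - 1), ((y + t4)/2), true, true; rewrite /=; lra.
Qed.
Lemma leb_mono (A B : set R) : A `<=` B ->
  (lebesgue_measure A <= lebesgue_measure B)%E.
Proof. move=> AB. rewrite /lebesgue_measure /lebesgue_stieltjes_measure /measure_extension.
exact: le_mu_ext. Qed.

Lemma int_mono d (T : measurableType d) (mu : {measure set T -> \bar R}) (f g : T -> \bar R) :
  (forall x, 0 <= f x)%E -> (forall x, f x <= g x)%E -> (\int[mu]_x f x <= \int[mu]_x g x)%E.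
Proof.
move=> f0 fg.
have g0 : forall x, (0 <= g x)%E by move=> x; apply: le_trans (fg x).
rewrite !ge0_integralTE //.
apply: le_ereal_sup => _ [h hf <-]; exists h => //= x; exact: le_trans (hf x) (fg x).
Qed.
Lemma leb_union0 (X Y: set R) : measurable X -> measurable Y ->
  lebesgue_measure X = 0%E -> lebesgue_measure Y = 0%E -> lebesgue_measure (X `|` Y) = 0%E.
Proof.
move=> mX mY hX hY; apply/le_anti; rewrite measure_ge0 andbT.
apply: le_trans; first exact: (measureU2 lebesgue_measure mX mY).
change (lebesgue_measure X + lebesgue_measure Y <= 0)%E.
by rewrite hX hY adde0.
Qed.
End G.

Theorem lemma4 (R : realType) (b0 : R) :
  0 < b0 < pi ->
  exists P : seq (R * R),
    ereal_sup [set area (Ohull b P) | b in `]0, pi[ ] <> area (Ohull b0 P).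
Proof.
move=> /andP[b0p b0pi].
set b := b0 / 2.
have bp : 0 < b by rewrite /b; lra.
have bpi : b < pi by rewrite /b; lra.
have sb0 : 0 < sin b0 by apply: sin_gt0_pi; lra.
have sb : 0 < sin b by apply: sin_gt0_pi; lra.
have sb0n : sin b0 != 0 by rewrite gt_eqF.
have sbn : sin b != 0 by rewrite gt_eqF.
have hk : sin b0 * cos b - cos b0 * sin b = sin b.
  by rewrite -sinB /b; congr sin; field.
set k := sin b / sin b0.
have kp : 0 < k by rewrite /k divr_gt0.
have kn : k != 0 by rewrite gt_eqF.
have T0E p : Tc b0 p = Tc b p * k.
  by rewrite /Tc /k; field; rewrite sb0n sbn.
have S0E p : Sc b0 p = Sc b p + k * Tc b p.
  apply/eqP; rewrite -subr_eq0.
  have -> : Sc b0 p - (Sc b p + k * Tc b p) =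
     p.2 * (sin b0 * cos b - cos b0 * sin b - sin b) / (sin b * sin b0).
    by rewrite /Sc /Tc /k; field; rewrite sb0n sbn.
  by rewrite hk subrr mulr0 mul0r.
set l := 4 / k.
have lp : 0 < l by rewrite /l divr_gt0.
have lk : k * l = 4 by rewrite /l; field.
set A := pt b (-1) (- (2 * l)).
set B := pt b 2 (- l).
set C := pt b (-2) l.
set D := pt b 1 (2 * l).
exists [:: A; B; C; D].
have H0 : forall p, Ohull b0 [:: A; B; C; D] p ->
   Tc b0 p = -8 \/ Tc b0 p = -4 \/ Tc b0 p = 4 \/ Tc b0 p = 8.
  move=> p Hp.
  have [e1|n1] := eqVneq (Tc b0 p) (-8); first by left.
  have [e2|n2] := eqVneq (Tc b0 p) (-4); first by right; left.
  have [e3|n3] := eqVneq (Tc b0 p) 4; first by right; right; left.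
  have [e4|n4] := eqVneq (Tc b0 p) 8; first by right; right; right.
  have [sa [ta [e1 [e2 [Hq [q1 [q2 [q3 q4]]]]]]]] :=
    @chain4 R (Sc b0 p) (Tc b0 p) (-9) (-2) 2 9 (-8) (-4) 4 8
      ltac:(lra) ltac:(lra) ltac:(lra) ltac:(lra) ltac:(lra) ltac:(lra) n1 n2 n3 n4.
  exfalso; apply: Hp; exists (pt b0 sa ta), e1, e2; split; last first.
    by rewrite OquadE Sc_pt // Tc_pt.
  have cA : Sc b0 A = -9 /\ Tc b0 A = -8.
    by rewrite S0E T0E /A Sc_pt // Tc_pt //; split; rewrite /l; field.
  have cB : Sc b0 B = -2 /\ Tc b0 B = -4.
    by rewrite S0E T0E /B Sc_pt // Tc_pt //; split; rewrite /l; field.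
  have cC : Sc b0 C = 2 /\ Tc b0 C = 4.
    by rewrite S0E T0E /C Sc_pt // Tc_pt //; split; rewrite /l; field.
  have cD : Sc b0 D = 9 /\ Tc b0 D = 8.
    by rewrite S0E T0E /D Sc_pt // Tc_pt //; split; rewrite /l; field.
  move=> q; rewrite !inE => /or4P[] /eqP -> ; rewrite OquadE Sc_pt // Tc_pt //.
  - by case: cA => -> ->.
  - by case: cB => -> ->.
  - by case: cC => -> ->.
  - by case: cD => -> ->.
have Z0 : area (Ohull b0 [:: A; B; C; D]) = 0%E.
  rewrite /area /product_measure1 /=; apply: integral0_eq => x _ /=.
  apply/le_anti; rewrite measure_ge0 andbT.
  have ms (y : R) : measurable [set y] by exact: measurable_set1.
  apply: (le_trans (leb_mono (B := [set (-8) * sin b0] `|` [set (-4) * sin b0] `|` [set 4 * sin b0] `|` [set 8 * sin b0]) _)).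
    move=> y; rewrite /xsection /= => /set_mem /H0; rewrite /Tc /=.
    have e (c : R) : y / sin b0 = c -> y = c * sin b0.
      by move=> <-; field.
    by move=> [/e->|[/e->|[/e->|/e->]]]; [left; left; left|left; left; right|left; right|right].
  rewrite !leb_union0 ?lebesgue_measure_set1 //; by repeat apply: measurableU.
set m := l / (2 * l + 2).
have em : m * (2 * l + 2) = l by rewrite /m; field; lra.
have mp : 0 < m by rewrite /m divr_gt0 //; lra.
have ml : m < l by have := mulr_gt0 mp lp; lra.
have m2 : 2 * m < 1.
  have h : (1 - 2 * m) * l = 2 * m by lra.
  have : 0 < (1 - 2 * m) * l by rewrite h; lra.
  by rewrite pmulr_lgt0 //; lra.
set v := sin b * m.
have vp : 0 < v by rewrite /v mulr_gt0.
have Rsub : `]-(1/2), 1/2[ `*` `]-v, v[ `<=` Ohull b [:: A; B; C; D].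
  move=> [x y] [/= hx hy]; move: hx hy; rewrite !in_itv /= => /andP[hx1 hx2] /andP[hy1 hy2].
  move=> [a [e1 [e2 [Pf Hq]]]]; move: Hq; rewrite OquadE.
  set T := Tc b (x, y).
  have eT : T * sin b = y by rewrite /T /Tc /=; field.
  have T1 : - m < T by rewrite -(ltr_pM2r sb); rewrite /v in hy1; lra.
  have T2 : T < m by rewrite -(ltr_pM2r sb); rewrite /v in hy2; lra.
  have c1 := cos_geN1 b; have c2 := cos_le1 b.
  have Tc1 : T * cos b <= m.
    have : 0 <= (m - T) * (1 + cos b) by apply: mulr_ge0; lra.
    have : 0 <= (m + T) * (1 - cos b) by apply: mulr_ge0; lra.
    lra.
  have Tc2 : - m <= T * cos b.
    have : 0 <= (m - T) * (1 - cos b) by apply: mulr_ge0; lra.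
    have : 0 <= (m + T) * (1 + cos b) by apply: mulr_ge0; lra.
    lra.
  have eS : Sc b (x, y) = x - T * cos b by [].
  rewrite eS /quad; case: e1 Pf; case: e2 => Pf /= [q1 q2].
  - apply: (Pf D); first by rewrite !inE eqxx ?orbT ?orTb.
    by rewrite OquadE /D Sc_pt // Tc_pt // /quad /=; lra.
  - apply: (Pf B); first by rewrite !inE eqxx ?orbT ?orTb.
    by rewrite OquadE /B Sc_pt // Tc_pt // /quad /=; lra.
  - apply: (Pf C); first by rewrite !inE eqxx ?orbT ?orTb.
    by rewrite OquadE /C Sc_pt // Tc_pt // /quad /=; lra.
  - apply: (Pf A); first by rewrite !inE eqxx ?orbT ?orTb.
    by rewrite OquadE /A Sc_pt // Tc_pt // /quad /=; lra.
set I1 : set R := [set` `]-(1/2), 1/2[].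
set I2 : set R := [set` `]-v, v[].
set rect : set (R * R) := I1 `*` I2.
have Arect : (0 < area rect)%E.
  rewrite /area /rect product_measure1E; [|exact: measurable_itv|exact: measurable_itv].
  change (0 < lebesgue_measure I1 * lebesgue_measure I2)%E.
  rewrite /I1 /I2 !lebesgue_measure_itv /= !lte_fin.
  have h1 : - (1/2) < 1/2 :> R by lra.
  have h2 : - v < v by lra.
  rewrite h1 h2.
  rewrite -!EFinD -EFinM lte_fin; apply: mulr_gt0; lra.
have Apos : (0 < area (Ohull b [:: A; B; C; D]))%E.
  apply: (lt_le_trans Arect).
  rewrite /area /product_measure1; apply: int_mono => x; first exact: measure_ge0.
  apply: leb_mono => y; rewrite /xsection /= => /set_mem H; apply/mem_set; exact: Rsub.
set S := ereal_sup _ => E.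
have : (area (Ohull b [:: A; B; C; D]) <= S)%E.
  by apply: ereal_sup_ubound; exists b => //; rewrite /= in_itv /= bp bpi.
rewrite E Z0 => /(lt_le_trans Apos); rewrite ltxx.
done.
Qed.
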